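(* Let $s_Z$ be the Zeckendorf sum of digits function. Let $I_Z=(I_Z(n))_{n\ge1}$ be the increasing enumeration of the points of increase of $s_Z$, $C_Z=(C_Z(n))_{n\ge1}$ the increasing enumeration of the points of constancy of $s_Z$, and $D_Z=(D_Z(n))_{n\ge1}$ the sequence with $D_Z(1)=-1$ and $D_Z(n+1)$ equal to the $n$-th smallest point of decrease of $s_Z$ ($n\ge1$). Then: (i) $I_Z(1)=0$, and the sequence $\Delta I_Z$ is the fixed point of the morphism $3\mapsto 32,\ 2\mapsto 3$ (on the alphabet $\{2,3\}$); (ii) $C_Z(1)=1$, and $\Delta C_Z$ is the fixed point of the morphism on the alphabet $\{1,3,4\}$ given by $1\mapsto 14,\ 3\mapsto 14,\ 4\mapsto 3$; (iii) $D_Z(1)=-1$, and $\Delta D_Z$ is the fixed point of the morphism $5\mapsto 53,\ 3\mapsto 5$ (on the alphabet $\{3,5\}$).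
   Context: Fibonacci numbers: $F_0=0$, $F_1=1$, $F_n=F_{n-1}+F_{n-2}$. Every integer $N\ge0$ has a unique Zeckendorf expansion $N=\sum_{i\ge0}d_i(N)F_{i+2}$ with $d_i(N)\in\{0,1\}$ and no two consecutive digits equal to $1$; $s_Z(N)=\sum_i d_i(N)$. An integer $N\ge0$ is a point of increase, constancy, or decrease of $s_Z$ according as $s_Z(N+1)-s_Z(N)$ is $>0$, $=0$, or $<0$. For a sequence $V=(V(n))_{n\ge1}$, $\Delta V$ denotes the sequence $(V(n+1)-V(n))_{n\ge1}$, viewed as an infinite word. For a morphism $\mu$ and a letter $a$ with $\mu(a)$ beginning with $a$ and of length $\ge2$, the fixed point of $\mu$ is the infinite word $\lim_n\mu^n(a)$; in each case here the fixed point is unique. *)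

(* Defs.v *)
From Stdlib Require Import ClassicalEpsilon.
From mathcomp Require Import all_boot all_order all_algebra.
Set Implicit Arguments. Unset Strict Implicit. Unset Printing Implicit Defensive.
Import GRing.Theory Num.Theory.

Fixpoint fib (n : nat) : nat :=
  match n with
  | 0 => 0
  | 1 => 1
  | (m.+1 as k).+1 => fib k + fib m
  end.

Definition zeck_val (d : seq bool) : nat :=
  \sum_(i < size d) (nth false d i) * fib (i + 2).

Definition no_consec_ones (d : seq bool) : Prop :=
  forall i, ~~ (nth false d i && nth false d i.+1).

Definition zeck_rep (d : seq bool) (N : nat) : Prop :=
  no_consec_ones d /\ zeck_val d = N.

Definition sZ (N : nat) : nat :=
  epsilon (inhabits 0%N) (fun k => exists d, zeck_rep d N /\ count id d = k).

Definition incr_pt (N : nat) : Prop := (sZ N < sZ N.+1)%N.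
Definition const_pt (N : nat) : Prop := sZ N.+1 = sZ N.
Definition decr_pt (N : nat) : Prop := (sZ N.+1 < sZ N)%N.

Definition enumerates (P : nat -> Prop) (V : nat -> int) : Prop :=
  (forall n m, (1 <= n)%N -> (n < m)%N -> (V n < V m)%R) /\
  (forall n, (1 <= n)%N -> exists k, V n = Posz k /\ P k) /\
  (forall k, P k -> exists n, (1 <= n)%N /\ V n = Posz k).

(* Delta V as an infinite word indexed from 0: (Delta V)_i = V(i+2) - V(i+1). *)
Definition Delta (V : nat -> int) : nat -> int := fun i => (V i.+2 - V i.+1)%R.

Definition apply_morph (mu : int -> seq int) (w : seq int) : seq int :=
  flatten (map mu w).

(* x is the fixed point lim_n mu^n(a): it agrees with every mu^n(a) on its length. *)
Definition is_fixed_point (mu : int -> seq int) (a : int) (x : nat -> int) : Prop :=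
  forall n i, (i < size (iter n (apply_morph mu) [:: a]))%N ->
    x i = nth 0%R (iter n (apply_morph mu) [:: a]) i.

Definition muI (c : int) : seq int :=
  if c == 3%R then [:: 3%R; 2%R] else if c == 2%R then [:: 3%R] else [::].
Definition muC (c : int) : seq int :=
  if c == 1%R then [:: 1%R; 4%R] else if c == 3%R then [:: 1%R; 4%R]
  else if c == 4%R then [:: 3%R] else [::].
Definition muD (c : int) : seq int :=
  if c == 5%R then [:: 5%R; 3%R] else if c == 3%R then [:: 5%R] else [::].

(* Main.v *)
Require Import Defs.
From mathcomp Require Import all_boot all_order all_algebra.
From mathcomp Require Import zify.
From Stdlib Require Import ClassicalEpsilon Lia.
Set Implicit Arguments. Unset Strict Implicit. Unset Printing Implicit Defensive.

Notation "n .+5" := (n.+4).+1 (at level 1, left associativity, format "n .+5") : nat_scope.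
Notation "n .+6" := (n.+5).+1 (at level 1, left associativity, format "n .+6") : nat_scope.
Notation "n .+7" := (n.+6).+1 (at level 1, left associativity, format "n .+7") : nat_scope.
Notation "n .+8" := (n.+7).+1 (at level 1, left associativity, format "n .+8") : nat_scope.

Lemma fibSS n : fib n.+2 = fib n.+1 + fib n.
Proof. by []. Qed.

Lemma fib_le_S n : fib n <= fib n.+1.
Proof. case: n => [|n] //; rewrite fibSS; lia. Qed.

Lemma fib_mono m n : m <= n -> fib m <= fib n.
Proof.
move=> /subnKC <-; elim: (n - m) => [|k IH]; first by rewrite addn0.
rewrite addnS; exact: leq_trans IH (fib_le_S _).
Qed.

Lemma fib_pos n : 0 < fib n.+1.
Proof. elim: n => [|n IH] //; rewrite fibSS; lia. Qed.

Lemma fib_ge n : n < fib n.+2.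
Proof.
elim: n => [|n IH] //; rewrite fibSS. have := fib_pos n. lia.
Qed.

Definition wsum (w : nat -> nat) (f : nat -> bool) m := \sum_(i < m) f i * w i.
Definition fw i := fib (i + 2).

Lemma wsumS w f m : wsum w f m.+1 = wsum w f m + f m * w m.
Proof. by rewrite /wsum big_ord_recr. Qed.

Lemma wsum_ext w f a b : (forall i, a <= i -> f i = false) -> a <= b ->
  wsum w f b = wsum w f a.
Proof.
move=> Hf /subnKC <-; elim: (b - a) => [|k IH]; first by rewrite addn0.
by rewrite addnS wsumS IH Hf ?leq_addr // mul0n addn0.
Qed.

Definition nc (f : nat -> bool) := forall i, ~~ (f i && f i.+1).

Lemma wsum_bound f m : nc f -> wsum fw f m < fib m.+2.
Proof.
move=> Hf.
suff: wsum fw f m < fib m.+2 /\ wsum fw f m.+1 < fib m.+3 by case.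
elim: m => [|m [IH1 IH2]].
  by rewrite wsumS /wsum big_ord0 /fw; case: (f 0).
split=> //.
rewrite wsumS.
have -> : fw m.+1 = fib m.+3 by rewrite /fw addn2.
case E: (f m.+1).
- have Fm : f m = false by move: (Hf m); rewrite E andbT; case: (f m).
  move: IH1; rewrite wsumS Fm mul0n addn0 => IH1.
  rewrite mul1n [fib m.+4]fibSS. lia.
- rewrite mul0n addn0; apply: leq_trans IH2 _; exact: fib_le_S.
Qed.

Lemma wsum_uniq m f g : nc f -> nc g -> wsum fw f m = wsum fw g m ->
  wsum (fun _ => 1) f m = wsum (fun _ => 1) g m.
Proof.
move=> Hf Hg; elim: m => [|m IH]; first by rewrite /wsum !big_ord0.
rewrite !wsumS.
have Bf := wsum_bound m Hf; have Bg := wsum_bound m Hg.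
have -> : fw m = fib m.+2 by rewrite /fw addn2.
case Ef: (f m); case Eg: (g m); rewrite ?mul1n ?mul0n ?addn0 ?muln1.
- by move=> /addIn /IH ->.
- lia.
- lia.
- by move=> /IH ->.
Qed.

Lemma wsum_eq w f g m : f =1 g -> wsum w f m = wsum w g m.
Proof. by move=> E; apply: eq_bigr => i _; rewrite E. Qed.

Lemma wsum_mono w f a b : a <= b -> wsum w f a <= wsum w f b.
Proof.
move=> /subnKC <-; elim: (b - a) => [|k IH]; first by rewrite addn0.
rewrite addnS wsumS; exact: leq_trans IH (leq_addr _ _).
Qed.

Lemma zeck_valE d : zeck_val d = wsum fw (nth false d) (size d).
Proof. by []. Qed.

Lemma countE d : count id d = wsum (fun _ => 1) (nth false d) (size d).
Proof.
elim: d => [|b d IH]; first by rewrite /wsum big_ord0.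
by rewrite /= /wsum big_ord_recl /= IH muln1.
Qed.

Lemma nth_true_bound d i : nth false d i -> fw i <= zeck_val d.
Proof.
move=> Hi.
have Hs : i < size d by rewrite ltnNge; apply/negP => /(nth_default false); rewrite Hi.
rewrite zeck_valE; apply: leq_trans (wsum_mono _ _ Hs).
by rewrite wsumS Hi mul1n leq_addl.
Qed.

Lemma wsum_size w d m : size d <= m -> wsum w (nth false d) m = wsum w (nth false d) (size d).
Proof. by move=> H; apply: wsum_ext => // i Hi; rewrite nth_default. Qed.

Lemma rep_count d d' N : zeck_rep d N -> zeck_rep d' N -> count id d = count id d'.
Proof.
move=> [H1 V1] [H2 V2].
rewrite !countE -(@wsum_size _ d (maxn (size d) (size d'))) ?leq_maxl //.
rewrite -(@wsum_size _ d' (maxn (size d) (size d'))) ?leq_maxr //.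
apply: wsum_uniq => //.
rewrite !wsum_size ?leq_maxl ?leq_maxr // -!zeck_valE V1 V2 //.
Qed.

Lemma rep_ext d M n : zeck_rep d M -> M < fib n.+1 ->
  exists d', zeck_rep d' (fib n.+2 + M) /\ count id d' = (count id d).+1.
Proof.
move=> [Hnc HV] HM.
have H : forall i, n <= i.+1 -> nth false d i = false.
  move=> i Hi; apply/negP => /nth_true_bound; rewrite HV /fw => Hb.
  have : fib n.+1 <= fib (i + 2) by apply: fib_mono; lia.
  lia.
pose f i := (i == n) || nth false d i.
have Ef : nth false (mkseq f n.+1) =1 f.
  move=> i; case: (ltnP i n.+1) => Hi; first by rewrite nth_mkseq.
  rewrite nth_default ?size_mkseq // /f H; last by lia.
  by case: eqP => // E; lia.
have Eext : forall w, wsum w (nth false d) n = wsum w (nth false d) (size d).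
  move=> w.
  have Hz : forall i, minn n (size d) <= i -> nth false d i = false.
    move=> i Hi; case: (leqP n i) => Hn; first by apply: H; lia.
    by rewrite nth_default //; lia.
  rewrite (@wsum_ext w _ (minn n (size d)) n) ?geq_minl //.
  by rewrite (@wsum_ext w _ (minn n (size d)) (size d)) ?geq_minr.
have Elow : forall w, wsum w f n = wsum w (nth false d) n.
  move=> w; apply: eq_bigr => i _; rewrite /f.
  by have := ltn_ord i; case: eqP => // ->; rewrite ltnn.
exists (mkseq f n.+1); split; first split.
- move=> i; rewrite !Ef /f.
  case: (eqVneq i n) => [->|Hin] /=.
    rewrite (H n.+1); last lia. apply/negP => /orP [/eqP|//]; lia.
  case: (eqVneq i.+1 n) => [Ei|Hin1] /=.
    by rewrite H //; rewrite Ei.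
  exact: Hnc.
- rewrite zeck_valE size_mkseq (wsum_eq _ _ Ef) wsumS Elow Eext -zeck_valE HV.
  by rewrite /f eqxx /fw mul1n addn2 addnC.
- rewrite !countE size_mkseq (wsum_eq _ _ Ef) wsumS Elow Eext.
  by rewrite /f eqxx addn1.
Qed.

Lemma rep_exists_aux n N : N < fib n.+1 -> exists d, zeck_rep d N.
Proof.
elim: n N => [|n IH] N HN.
  have -> : N = 0 by move: HN => /=; lia.
  exists [::]; split; first by intro i; rewrite nth_nil.
  by rewrite zeck_valE /wsum big_ord0.
case: (ltnP N (fib n.+1)) => H1; first exact: IH.
case: n IH HN H1 => [|n] IH HN H1; first by move: HN H1 => /=; lia.
have HM : N - fib n.+2 < fib n.+1 by move: HN; rewrite fibSS; lia.
have [d Hd] := IH _ (leq_trans HM (fib_le_S _)).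
have [d' [Hd' _]] := rep_ext Hd HM.
rewrite subnKC // in Hd'; by exists d'.
Qed.

Lemma rep_exists N : exists d, zeck_rep d N.
Proof. apply: (@rep_exists_aux N.+1); exact: fib_ge. Qed.

Lemma sZ_spec d N : zeck_rep d N -> sZ N = count id d.
Proof.
move=> Hd; rewrite /sZ.
have [d0 Hd0] := rep_exists N.
have := @epsilon_spec nat (inhabits 0) (fun k => exists d, zeck_rep d N /\ count id d = k).
case.
  by exists (count id d0), d0.
move=> d1 [H1 <-]; exact: rep_count H1 Hd.
Qed.

Lemma sZ0 : sZ 0 = 0.
Proof.
rewrite (@sZ_spec [::]) //; split; first by intro i; rewrite nth_nil.
by rewrite zeck_valE /wsum big_ord0.
Qed.

Lemma sZ_add n M : M < fib n.+1 -> sZ (fib n.+2 + M) = (sZ M).+1.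
Proof.
move=> HM; have [d Hd] := rep_exists M.
have [d' [Hd' Hc]] := rep_ext Hd HM.
by rewrite (sZ_spec Hd') (sZ_spec Hd).
Qed.

Fixpoint zsf n N := match n with
  | 0 => 0
  | n'.+1 => if N < fib n'.+2 then zsf n' N else (zsf n' (N - fib n'.+2)).+1
  end.

Lemma sZ_zsf n N : N < fib n.+2 -> sZ N = zsf n N.
Proof.
elim: n N => [|n IH] N HN.
  have -> : N = 0 by move: HN => /=; lia.
  exact: sZ0.
rewrite [zsf _ _]/=; case: (ltnP N (fib n.+2)) => H1; first exact: IH.
have HM : N - fib n.+2 < fib n.+1 by move: HN H1; rewrite [fib n.+3]fibSS; lia.
rewrite -(IH _ (leq_trans HM (fib_le_S _))) -(@sZ_add n) //; by rewrite subnKC.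
Qed.

Definition cls N := if sZ N < sZ N.+1 then 0 else if sZ N.+1 == sZ N then 1 else 2.

Lemma cls_add n x : x.+1 < fib n.+1 -> cls (fib n.+2 + x) = cls x.
Proof.
move=> Hx; have Hx' := ltnW Hx.
by rewrite /cls -addnS !sZ_add // ltnS eqSS.
Qed.

Lemma sZ_fibm1 n : 2 <= sZ (fib n.+5 - 1).
Proof.
suff: 2 <= sZ (fib n.+5 - 1) /\ 2 <= sZ (fib n.+6 - 1) by case.
elim: n => [|n [IH1 IH2]].
  by rewrite !(@sZ_zsf 5).
split=> //.
have -> : fib n.+7 - 1 = fib n.+6 + (fib n.+5 - 1).
  rewrite [fib n.+7]fibSS; have := fib_pos n.+4; lia.
rewrite sZ_add; first by apply: leq_trans IH1 _.
have := fib_pos n.+4; lia.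
Qed.

Lemma cls_fibm1 n : cls (fib n.+5 - 1) = 2.
Proof.
have Hp := fib_pos n.+4.
have E : (fib n.+5 - 1).+1 = fib n.+3.+2 + 0 by lia.
have H2 := sZ_fibm1 n.
rewrite /cls E sZ_add ?sZ0 //; last exact: fib_pos.
case: ifP => H; first lia.
case: eqP => //; lia.
Qed.

Lemma cls_fib n : cls (fib n.+4) = cls 0.
Proof. rewrite -[fib n.+4]addn0 cls_add //; apply: (leq_trans _ (fib_mono (_ : 3 <= n.+3))) => //. Qed.

Lemma cls_fib1 n : cls (fib n.+5 + 1) = cls 1.
Proof. rewrite cls_add //; apply: (leq_trans _ (fib_mono (_ : 4 <= n.+4))) => //. Qed.

Lemma cls_trans k x : x <= fib k.+5 + 1 -> cls (fib k.+6 + x) = cls x.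
Proof.
move=> Hx.
have Hp := fib_pos k.+4.
have [H|[H|[H|H]]] : x.+1 < fib k.+5 \/ x = fib k.+5 - 1 \/ x = fib k.+5 \/ x = fib k.+5 + 1 by lia.
- exact: cls_add.
- have -> : fib k.+6 + x = fib k.+2.+5 - 1 by rewrite [fib k.+7]fibSS; lia.
  by rewrite H !cls_fibm1.
- have -> : fib k.+6 + x = fib k.+3.+4 by rewrite [fib k.+7]fibSS; lia.
  by rewrite H cls_fib -[fib k.+5]/(fib k.+1.+4) cls_fib.
- have -> : fib k.+6 + x = fib k.+2.+5 + 1 by rewrite [fib k.+7]fibSS; lia.
  by rewrite H !cls_fib1.
Qed.

Definition T (k h1 n : nat) := filter (fun N => cls N == k) (iota h1 (fib n)).

Lemma T_rec k h1 j : h1 <= 2 ->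
  T k h1 j.+7 = T k h1 j.+6 ++ map (addn (fib j.+6)) (T k h1 j.+5).
Proof.
move=> Hh; rewrite /T [fib j.+7]fibSS iotaD filter_cat; congr (_ ++ _).
rewrite addnC iotaDl filter_map; congr map.
apply: eq_in_filter => x; rewrite mem_iota => /andP [H1 H2] /=.
by rewrite cls_trans //; lia.
Qed.

Lemma T_last k h1 (h : int) n : cls (h1 + fib n.+1 - 1) == k -> Posz h1 = (h + 1)%R ->
  last h (map Posz (T k h1 n.+1)) = (h + Posz (fib n.+1))%R.
Proof.
move=> Hc Hh.
have Hp := fib_pos n.
rewrite /T; move: Hc Hp; case: (fib n.+1) => [|F] // Hc _.
rewrite -addn1 iotaD filter_cat map_cat last_cat.
have Hc' : cls (h1 + F) == k by move: Hc; rewrite addnS subn1.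
rewrite /= Hc' /=; lia.
Qed.

Definition W k h1 (h : int) n := pairmap (fun a b : int => (b - a)%R) h (map Posz (T k h1 n)).

Lemma pairmap_shift (a c : int) (s : seq int) :
  pairmap (fun a b : int => (b - a)%R) (a + c)%R (map (fun z => z + c)%R s) =
  pairmap (fun a b : int => (b - a)%R) a s.
Proof.
elim: s a => [|x s IH] a //=; rewrite IH; congr (_ :: _); lia.
Qed.

Lemma W_rec k h1 h j : h1 <= 2 ->
  last h (map Posz (T k h1 j.+6)) = (h + Posz (fib j.+6))%R ->
  W k h1 h j.+7 = W k h1 h j.+6 ++ W k h1 h j.+5.
Proof.
move=> Hh Hl; rewrite /W T_rec // map_cat pairmap_cat Hl; congr (_ ++ _).
rewrite -map_comp -(pairmap_shift h (Posz (fib j.+6))) -map_comp.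
congr pairmap; apply: eq_map => x /=; lia.
Qed.

Lemma enum_filter (P : nat -> Prop) (p : pred nat) (V : nat -> int) B :
  (forall x, P x <-> p x) -> enumerates P V ->
  forall j, j < size (filter p (iota 0 B)) -> V j.+1 = Posz (nth 0 (filter p (iota 0 B)) j).
Proof.
move=> HP [Hinc [Hin Hall]].
set s := filter p (iota 0 B).
have Hlt : sorted ltn s by apply: sorted_filter; [exact: ltn_trans | exact: iota_ltn_sorted].
have Hle : sorted leq s by apply: sorted_filter; [exact: leq_trans | exact: iota_sorted].
have Hmem : forall x, (x \in s) = p x && (x < B).
  by move=> x; rewrite mem_filter mem_iota.
have Hmono : forall a b, 1 <= a -> a <= b -> (V a <= V b)%R.
  move=> a b Ha; rewrite leq_eqVlt => /orP [/eqP ->//|Hab].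
  exact: Order.POrderTheory.ltW (Hinc _ _ Ha Hab).
have Hsp : forall i, i < size s -> p (nth 0 s i) && (nth 0 s i < B).
  by move=> i Hi; rewrite -Hmem mem_nth.
elim=> [|j IH] Hj.
- have [Hp0 HB0] := andP (Hsp _ Hj).
  have [n [Hn Vn]] := Hall _ (proj2 (HP _) Hp0).
  have [k [Vk Pk]] := Hin 1 (leqnn 1).
  have := Hmono 1 n (leqnn 1) Hn; rewrite Vn Vk lez_nat => Hk.
  have Hks : k \in s by rewrite Hmem (proj1 (HP _) Pk) /=; lia.
  have Hi := Hks; rewrite -index_mem in Hi.
  have := @sorted_leq_nth _ _ leq_trans leqnn 0 s Hle (0) (index k s) Hj Hi (leq0n _).
  rewrite nth_index // => Hk2.
  congr Posz; lia.
- have Hj' : j < size s by lia.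
  have IHj := IH Hj'.
  have [Hp0 HB0] := andP (Hsp _ Hj).
  have [n [Hn Vn]] := Hall _ (proj2 (HP _) Hp0).
  have Hsj := @sorted_ltn_nth _ _ ltn_trans 0 s Hlt (j) (j.+1) Hj' Hj (ltnSn _).
  have Hnj : j.+1 < n.
    rewrite ltnNge; apply/negP => Hnj.
    have := Hmono n j.+1 Hn Hnj; rewrite Vn IHj lez_nat; lia.
  have [k [Vk Pk]] := Hin j.+2 (ltn0Sn _).
  have := Hmono j.+2 n (ltn0Sn _) Hnj; rewrite Vn Vk lez_nat => Hk.
  have := Hinc j.+1 j.+2 (ltn0Sn _) (ltnSn _); rewrite Vk IHj ltz_nat => Hk1.
  have Hks : k \in s by rewrite Hmem (proj1 (HP _) Pk) /=; lia.
  have Hi := Hks; rewrite -index_mem in Hi.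
  have Hij : j < index k s.
    rewrite ltnNge; apply/negP => Hij.
    have := @sorted_leq_nth _ _ leq_trans leqnn 0 s Hle (index k s) (j) Hi Hj' Hij.
    rewrite nth_index //; lia.
  have := @sorted_leq_nth _ _ leq_trans leqnn 0 s Hle (j.+1) (index k s) Hj Hi Hij.
  rewrite nth_index // => Hk2.
  congr Posz; lia.
Qed.

Definition clsf N := let a := zsf 6 N in let b := zsf 6 N.+1 in
  if a < b then 0 else if b == a then 1 else 2.

Lemma clsE N : N < 20 -> cls N = clsf N.
Proof. by move=> H; rewrite /cls /clsf !(@sZ_zsf 6) //; apply: leq_trans H _. Qed.

Lemma TE k h1 n : h1 + fib n <= 20 ->
  T k h1 n = filter (fun N => clsf N == k) (iota h1 (fib n)).
Proof.
move=> H; apply: eq_in_filter => x; rewrite mem_iota => /andP [_ Hx].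
by rewrite clsE //; lia.
Qed.

Lemma apply_morph_cat mu s t : apply_morph mu (s ++ t) = apply_morph mu s ++ apply_morph mu t.
Proof. by rewrite /apply_morph map_cat flatten_cat. Qed.

Lemma iter_cat mu n s t : iter n (apply_morph mu) (s ++ t) =
  iter n (apply_morph mu) s ++ iter n (apply_morph mu) t.
Proof. by elim: n => [|n IH] //=; rewrite IH apply_morph_cat. Qed.

Lemma muI_rec n : iter n.+2 (apply_morph muI) [:: 3%R] =
  iter n.+1 (apply_morph muI) [:: 3%R] ++ iter n (apply_morph muI) [:: 3%R].
Proof.
rewrite iterSr; have -> : apply_morph muI [:: 3%R] = [:: 3%R] ++ [:: 2%R] by [].
rewrite iter_cat; congr (_ ++ _); rewrite iterSr; have -> : apply_morph muI [:: 2%R] = [:: 3%R] by [].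
by [].
Qed.

Lemma muD_rec n : iter n.+2 (apply_morph muD) [:: 5%R] =
  iter n.+1 (apply_morph muD) [:: 5%R] ++ iter n (apply_morph muD) [:: 5%R].
Proof.
rewrite iterSr; have -> : apply_morph muD [:: 5%R] = [:: 5%R] ++ [:: 3%R] by [].
rewrite iter_cat; congr (_ ++ _); rewrite iterSr; have -> : apply_morph muD [:: 3%R] = [:: 5%R] by [].
by [].
Qed.

Lemma muC_rec n : iter n.+3 (apply_morph muC) [:: 1%R] =
  iter n.+2 (apply_morph muC) [:: 1%R] ++ iter n.+1 (apply_morph muC) [:: 1%R].
Proof.
rewrite iterSr; have -> : apply_morph muC [:: 1%R] = [:: 1%R] ++ [:: 4%R] by [].
rewrite iter_cat; congr (_ ++ _).
rewrite iterSr; have -> : apply_morph muC [:: 4%R] = [:: 3%R] by [].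
rewrite iterSr; have -> : apply_morph muC [:: 3%R] = apply_morph muC [:: 1%R] by [].
by rewrite -iterSr.
Qed.

Lemma baseI6 : W 0 1 0 6 = [:: 3; 2; 3]%R.
Proof. by rewrite /W TE. Qed.
Lemma baseI7 : W 0 1 0 7 = [:: 3; 2; 3; 3; 2]%R.
Proof. by rewrite /W TE. Qed.
Lemma baseC6 : W 1 2 1 6 = [:: 1; 4; 3]%R.
Proof. by rewrite /W TE. Qed.
Lemma baseC7 : W 1 2 1 7 = [:: 1; 4; 3; 1; 4]%R.
Proof. by rewrite /W TE. Qed.
Lemma baseD6 : W 2 0 (-1) 6 = [:: 5; 3]%R.
Proof. by rewrite /W TE. Qed.
Lemma baseD7 : W 2 0 (-1) 7 = [:: 5; 3; 5]%R.
Proof. by rewrite /W TE. Qed.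

Lemma finish (V : nat -> int) k h1 h (mu : int -> seq int) a c :
  h1 <= 2 ->
  (forall j, last h (map Posz (T k h1 j.+6)) = (h + Posz (fib j.+6))%R) ->
  W k h1 h 6 = iter c (apply_morph mu) [:: a] ->
  W k h1 h 7 = iter c.+1 (apply_morph mu) [:: a] ->
  (forall n, iter (n + c).+2 (apply_morph mu) [:: a] =
     iter (n + c).+1 (apply_morph mu) [:: a] ++ iter (n + c) (apply_morph mu) [:: a]) ->
  V 1%N = h ->
  (forall n j, j < size (T k h1 n) -> V j.+2 = Posz (nth 0 (T k h1 n) j)) ->
  (forall n, n < c -> forall i, i < size (iter n (apply_morph mu) [:: a]) ->
     i < size (iter c (apply_morph mu) [:: a]) /\
     nth 0%R (iter n (apply_morph mu) [:: a]) i = nth 0%R (iter c (apply_morph mu) [:: a]) i) ->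
  is_fixed_point mu a (Delta V).
Proof.
move=> Hh Hl B6 B7 Hrec V1 HV Hpre.
have HW : forall j, W k h1 h j.+6 = iter (j + c) (apply_morph mu) [:: a].
  move=> j; suff : W k h1 h j.+6 = iter (j + c) (apply_morph mu) [:: a] /\
                   W k h1 h j.+7 = iter (j + c).+1 (apply_morph mu) [:: a] by case.
  elim: j => [|j [IH1 IH2]]; first by split.
  split; first by rewrite IH2 addSn.
  by rewrite (W_rec Hh (Hl j.+1)) IH2 IH1 -Hrec addSn.
have Hd : forall j i, i < size (W k h1 h j.+6) -> Delta V i = nth 0%R (W k h1 h j.+6) i.
  move=> j i; rewrite /W size_pairmap size_map => Hi.
  rewrite (nth_pairmap 0%R) ?size_map // (nth_map 0) // -HV // /Delta.
  case: i Hi => [|i] Hi /=; first by rewrite V1.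
  by rewrite (nth_map 0) -?HV //; lia.
move=> n i Hi.
case: (leqP c n) => Hn.
  move: Hi; rewrite -(subnK Hn) -HW => Hi; exact: Hd.
have [Hi' ->] := Hpre n Hn i Hi.
move: Hi'; rewrite -[c]add0n -HW => Hi'; exact: Hd.
Qed.

Lemma clsI x : incr_pt x <-> cls x == 0.
Proof.
rewrite /incr_pt /cls; case: ifP => H; first by split.
by case: ifP.
Qed.

Lemma clsC x : const_pt x <-> cls x == 1.
Proof.
rewrite /const_pt /cls; case: ifP => H.
  split => // E; rewrite E ltnn in H; by [].
case: ifP => E; split => //; first by move/eqP: E.
by move=> E'; rewrite E' eqxx in E.
Qed.

Lemma clsD x : decr_pt x <-> cls x == 2.
Proof.
rewrite /decr_pt /cls; case: ifP => H.
  split => // E; move: H E; lia.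
case: ifP => E; split => // E'; move/negbT: H; move/eqP: E; lia.
Qed.

Theorem theorem3 (IZ CZ DZ : nat -> int) :
  enumerates incr_pt IZ ->
  enumerates const_pt CZ ->
  DZ 1%N = (-1)%R ->
  enumerates decr_pt (fun n => DZ n.+1) ->
  (IZ 1%N = 0%R /\ is_fixed_point muI 3%R (Delta IZ)) /\
  (CZ 1%N = 1%R /\ is_fixed_point muC 1%R (Delta CZ)) /\
  (DZ 1%N = (-1)%R /\ is_fixed_point muD 5%R (Delta DZ)).
Proof.
move=> HI HC HD1 HD.
have c0 : cls 0 = 0 by rewrite clsE.
have c1 : cls 1 = 1 by rewrite clsE.
have sI : forall n, filter (fun N => cls N == 0) (iota 0 (fib n).+1) = 0 :: T 0 1 n.
  by move=> n; rewrite /T /= c0.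
have I1 : IZ 1%N = 0%R.
  by rewrite (enum_filter (B := (fib 0).+1) clsI HI) // sI.
have sC : forall n, filter (fun N => cls N == 1) (iota 0 (fib n).+2) = 1 :: T 1 2 n.
  by move=> n; rewrite /T /= c0 c1.
have C1 : CZ 1%N = 1%R.
  by rewrite (enum_filter (B := (fib 0).+2) clsC HC) // sC.
split; [split=> //| split; split=> //].
- apply: (@finish IZ 0 1 0%R muI 3%R 2) => //.
  + move=> j; apply: T_last => //.
    have -> : 1 + fib j.+6 - 1 = fib j.+2.+4 by lia.
    by rewrite cls_fib c0.
  + by rewrite baseI6.
  + by rewrite baseI7.
  + move=> n; exact: muI_rec.
  + move=> n j Hj.
    by rewrite (enum_filter (B := (fib n).+1) clsI HI) sI.
  + by case=> [|[|]] // _ [|[|]].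
- apply: (@finish CZ 1 2 1%R muC 1%R 2) => //.
  + move=> j; apply: T_last => //.
    have -> : 2 + fib j.+6 - 1 = fib j.+1.+5 + 1 by lia.
    by rewrite cls_fib1 c1.
  + by rewrite baseC6.
  + by rewrite baseC7.
  + move=> n; rewrite addnS; exact: muC_rec.
  + move=> n j Hj.
    by rewrite (enum_filter (B := (fib n).+2) clsC HC) sC.
  + by case=> [|[|]] // _ [|[|]].
- apply: (@finish DZ 2 0 (-1)%R muD 5%R 1) => //.
  + move=> j; apply: T_last => //.
    have -> : 0 + fib j.+6 - 1 = fib j.+1.+5 - 1 by lia.
    by rewrite cls_fibm1.
  + by rewrite baseD6.
  + by rewrite baseD7.
  + move=> n; exact: muD_rec.
  + move=> n j Hj.
    by rewrite (enum_filter (P := decr_pt) (V := fun n => DZ n.+1) (B := fib n) clsD HD).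
  + by case=> [|[|]] // _ [|[|]].
Qed.
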